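(* Let $A_1$ and $B_1$ be arrays with $n$ columns, and suppose that $A_1$ and $B_1$ are $\phi$-equivalent with respect to the completely filled $m\times n$ array $J_{m,n}$, where $\phi$ is the bishop's move function. Then $A_1$ and $B_1$ are $\phi$-equivalent with respect to every $m\times n$ array.
   Context: Arrays are partially filled and toroidal, every row and column containing a filled cell; $F(X)$ is the set of filled cells. $s_R(i,j)=(i,j+t)$, $s_C(i,j)=(i+t,j)$ with $t\ge1$ minimal such that the cell is filled; the bishop's move is $s_C\circ s_R$. For arrays $Y$ and $X$ with the same number of columns, $[Y\mid X]^T$ denotes the array obtained by placing $Y$ above $X$; cells of $X$ are identified with their copies in it. Given a move function $\phi$ on $[A_1\mid X]^T$ and $\sigma$ on $[B_1\mid X]^T$, let $\phi_2:F(X)\to F(X)$, $\phi_2(x)=\phi^t(x)$ with $t\ge1$ minimal such that $\phi^t(x)\in X$, and similarly $\sigma_2$. $A_1$ and $B_1$ are $(\phi,\sigma)$-equivalent with respect to $X$ if for every $x\in F(X)$: $\phi(x)\notin X\iff\sigma(x)\notin X$, and if $\phi(x),\sigma(x)\notin X$ then $\phi_2(x)=\sigma_2(x)$. When $\phi$ and $\sigma$ are both the bishop's move this is called $\phi$-equivalence. *)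

(* Defs.v *)
From mathcomp Require Import all_boot.
Set Implicit Arguments. Unset Strict Implicit. Unset Printing Implicit Defensive.

(* An array with R rows and n columns is given by its set of filled cells
   F : {set 'I_R * 'I_n}; a cell is (row, column). *)

Definition is_array (R n : nat) (F : {set 'I_R * 'I_n}) : Prop :=
  (forall i : 'I_R, exists j : 'I_n, (i, j) \in F) /\
  (forall j : 'I_n, exists i : 'I_R, (i, j) \in F).

Lemma ord_pos (n : nat) (j : 'I_n) : 0 < n.
Proof. by case: n j => [[]|]. Qed.

Definition cshift (n : nat) (j : 'I_n) (t : nat) : 'I_n :=
  Ordinal (ltn_pmod (j + t) (ord_pos j)).

(* s_R(i,j) = (i, j+t) with t >= 1 minimal such that the cell is filled.
   For a filled cell, t = n works, so the minimal t lies in 1..n, and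
   (find ... (iota 1 n)).+1 is exactly that minimal t. *)
Definition sR (R n : nat) (F : {set 'I_R * 'I_n}) (x : 'I_R * 'I_n) : 'I_R * 'I_n :=
  let t := (find (fun t => (x.1, cshift x.2 t) \in F) (iota 1 n)).+1 in
  (x.1, cshift x.2 t).

Definition sC (R n : nat) (F : {set 'I_R * 'I_n}) (x : 'I_R * 'I_n) : 'I_R * 'I_n :=
  let t := (find (fun t => (cshift x.1 t, x.2) \in F) (iota 1 R)).+1 in
  (cshift x.1 t, x.2).

Definition bishop (R n : nat) (F : {set 'I_R * 'I_n}) (x : 'I_R * 'I_n) : 'I_R * 'I_n :=
  sC F (sR F x).

(* [Y | X]^T : Y (r rows) placed above X (m rows). *)
Definition stack (r m n : nat) (Y : {set 'I_r * 'I_n}) (X : {set 'I_m * 'I_n})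
  : {set 'I_(r + m) * 'I_n} :=
  [set p | match split p.1 with
           | inl i => (i, p.2) \in Y
           | inr i => (i, p.2) \in X
           end].

Definition embed (r m n : nat) (x : 'I_m * 'I_n) : 'I_(r + m) * 'I_n :=
  (rshift r x.1, x.2).

Definition inX (r R n : nat) (p : 'I_R * 'I_n) : bool := r <= p.1.

Definition coordX (r R n : nat) (p : 'I_R * 'I_n) : nat * nat := (p.1 - r, nat_of_ord p.2).

(* When f is a permutation
   of the R*n cells (or of the filled cells) and P x holds, this minimal t is
   at most R*n, so searching t in 1..R*n gives exactly the minimal t. *)
Definition first_return (R n : nat) (f : 'I_R * 'I_n -> 'I_R * 'I_n)
  (P : pred ('I_R * 'I_n)) (x : 'I_R * 'I_n) : 'I_R * 'I_n :=
  iter (find (fun t => P (iter t f x)) (iota 1 (R * n))).+1 f x.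

Definition phi2 (r m n : nat) (Y : {set 'I_r * 'I_n}) (X : {set 'I_m * 'I_n})
  (x : 'I_m * 'I_n) : 'I_(r + m) * 'I_n :=
  first_return (bishop (stack Y X)) (@inX r (r + m) n) (embed r x).

Definition phi_equiv (r1 r2 m n : nat) (A : {set 'I_r1 * 'I_n}) (B : {set 'I_r2 * 'I_n})
  (X : {set 'I_m * 'I_n}) : Prop :=
  forall x : 'I_m * 'I_n, x \in X ->
    let pa := bishop (stack A X) (embed r1 x) in
    let pb := bishop (stack B X) (embed r2 x) in
    (~~ inX r1 pa <-> ~~ inX r2 pb) /\
    (~~ inX r1 pa -> ~~ inX r2 pb ->
       coordX r1 (phi2 A X x) = coordX r2 (phi2 B X x)).

(* Main.v *)
Require Import Defs.
From mathcomp Require Import all_boot zify.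
Set Implicit Arguments. Unset Strict Implicit. Unset Printing Implicit Defensive.

Lemma cshift_val n (j : 'I_n) t : t <= n ->
  (cshift j t : nat) = if j + t < n then j + t else j + t - n.
Proof.
move=> tn; rewrite /cshift /=; case: ifP => h; first by rewrite modn_small.
have -> : j + t = (j + t - n) + n by have := ltn_ord j; lia.
rewrite modnDr modn_small; first lia.
have := ltn_ord j; lia.
Qed.

Definition nxt R (P : pred 'I_R) (i : 'I_R) : 'I_R :=
  cshift i (find (fun t => P (cshift i t)) (iota 1 R)).+1.

Lemma sR_nxt R n (F : {set 'I_R * 'I_n}) x :
  sR F x = (x.1, nxt (fun c => (x.1, c) \in F) x.2).
Proof. by []. Qed.

Lemma sC_nxt R n (F : {set 'I_R * 'I_n}) x :
  sC F x = (nxt (fun i => (i, x.2) \in F) x.1, x.2).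
Proof. by []. Qed.

Lemma nxt_spec R (P : pred 'I_R) i : P i ->
  exists d, [/\ 0 < d <= R, nxt P i = cshift i d, P (cshift i d) &
     forall t, 0 < t < d -> ~~ P (cshift i t)].
Proof.
move=> Pi.
have hR := ltn_ord i.
set p := (fun t => P (cshift i t)).
have hs : has p (iota 1 R).
  apply/hasP; exists R; first by rewrite mem_iota; lia.
  rewrite /p; have -> : cshift i R = i.
    apply: ord_inj; rewrite cshift_val //; case: ifP => h; lia.
  done.
have hf : find p (iota 1 R) < R by move: hs; rewrite has_find size_iota.
exists (find p (iota 1 R)).+1; split.
- lia.
- by [].
- have := nth_find 0 hs; rewrite nth_iota // add1n.
- move=> t /andP [t0 td].
  have := @before_find _ 0 p (iota 1 R) t.-1.
  rewrite nth_iota; last lia.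
  have -> : 1 + t.-1 = t by lia.
  move=> H; rewrite /p in H; rewrite H //; rewrite /p in td; lia.
Qed.


Lemma find_char (T : eqType) (p : pred T) s k x0 : k < size s -> p (nth x0 s k) ->
  (forall t, t < k -> ~~ p (nth x0 s t)) -> find p s = k.
Proof.
move=> ks pk H.
have hs : has p s by apply/hasP; exists (nth x0 s k) => //; exact: mem_nth.
case: (ltngtP (find p s) k) => // h.
- by have := nth_find x0 hs; rewrite (negbTE (H _ h)).
- by have := before_find x0 h; rewrite pk.
Qed.

Lemma nxt_char R (P : pred 'I_R) i d : 0 < d <= R -> P (cshift i d) ->
  (forall t, 0 < t < d -> ~~ P (cshift i t)) -> nxt P i = cshift i d.
Proof.
move=> /andP [d0 dR] Pd Hm.
rewrite /nxt (@find_char _ _ _ d.-1 0).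
- by rewrite prednK.
- rewrite size_iota; lia.
- rewrite nth_iota; last lia. by rewrite add1n prednK.
- move=> t tlt; rewrite nth_iota; last lia. apply: Hm; lia.
Qed.

Lemma nxt_in R (P : pred 'I_R) i : P i -> P (nxt P i).
Proof. by case/nxt_spec => d [_ -> ? _]. Qed.

Lemma nxt_inj R (P : pred 'I_R) i1 i2 : P i1 -> P i2 -> nxt P i1 = nxt P i2 -> i1 = i2.
Proof.
move=> P1 P2.
have [d1 [/andP [d10 d1R] -> Pd1 H1]] := nxt_spec P1.
have [d2 [/andP [d20 d2R] -> Pd2 H2]] := nxt_spec P2.
move=> /(congr1 (@nat_of_ord _)); rewrite !cshift_val //.
have h1 := ltn_ord i1; have h2 := ltn_ord i2.
move=> E.
case: (ltngtP d1 d2) => hd.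
- have : cshift i2 (d2 - d1) = i1.
    apply: ord_inj; rewrite cshift_val; last lia.
    move: E; do 3 (case: ifP => ?); lia.
  move=> E2; have := H2 (d2 - d1); rewrite E2 P1; move=> /(_ _)/negP; lia.
- have : cshift i1 (d1 - d2) = i2.
    apply: ord_inj; rewrite cshift_val; last lia.
    move: E; do 3 (case: ifP => ?); lia.
  move=> E2; have := H1 (d1 - d2); rewrite E2 P2; move=> /(_ _)/negP; lia.
- apply: ord_inj; move: E; rewrite hd; do 2 (case: ifP => ?); lia.
Qed.

Section Perm.
Variables (R n : nat) (F : {set 'I_R * 'I_n}).

Lemma sR_in x : x \in F -> sR F x \in F.
Proof.
case: x => i j hx; rewrite sR_nxt /=.
exact: (nxt_in (P := fun c => (i, c) \in F)).
Qed.

Lemma sC_in x : x \in F -> sC F x \in F.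
Proof.
case: x => i j hx; rewrite sC_nxt /=.
exact: (nxt_in (P := fun c => (c, j) \in F)).
Qed.

Lemma sR_inj x y : x \in F -> y \in F -> sR F x = sR F y -> x = y.
Proof.
case: x y => [i j] [i' j']; rewrite !sR_nxt => hx hy E.
have ei : i = i' := congr1 fst E; subst i'.
have E2 : nxt (fun c => (i, c) \in F) j = nxt (fun c => (i, c) \in F) j' := congr1 snd E.
by rewrite (nxt_inj (P := fun c => (i, c) \in F) hx hy E2).
Qed.

Lemma sC_inj x y : x \in F -> y \in F -> sC F x = sC F y -> x = y.
Proof.
case: x y => [i j] [i' j']; rewrite !sC_nxt => hx hy E.
have ej : j = j' := congr1 snd E; subst j'.
have E2 : nxt (fun c => (c, j) \in F) i = nxt (fun c => (c, j) \in F) i' := congr1 fst E.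
by rewrite (nxt_inj (P := fun c => (c, j) \in F) hx hy E2).
Qed.

Lemma bishop_in x : x \in F -> bishop F x \in F.
Proof. by move=> h; apply: sC_in; apply: sR_in. Qed.

Lemma bishop_inj x y : x \in F -> y \in F -> bishop F x = bishop F y -> x = y.
Proof.
move=> hx hy E; apply: sR_inj => //; apply: sC_inj => //; exact: sR_in.
Qed.

Lemma iter_in x t : x \in F -> iter t (bishop F) x \in F.
Proof. by move=> h; elim: t => // t IH; rewrite iterS; apply: bishop_in. Qed.

Lemma iter_cancel x s d : x \in F ->
  iter s (bishop F) x = iter (s + d) (bishop F) x -> x = iter d (bishop F) x.
Proof.
move=> hx; elim: s => // s IH; rewrite addSn !iterS => E.
apply: IH; apply: bishop_inj => //; exact: iter_in.
Qed.

Lemma bishop_period x : x \in F ->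
  exists t, 0 < t <= R * n /\ iter t (bishop F) x = x.
Proof.
move=> hx.
pose g := fun s : 'I_(R * n).+1 => iter s (bishop F) x.
have : ~~ injectiveb g.
  apply/negP => /injectiveP inj; have := leq_card _ inj.
  rewrite card_ord card_prod !card_ord; lia.
case/injectivePn => s1 [s2 ne E].
have hne : (s1 : nat) <> s2 by move=> h; move/eqP: ne; apply; apply: ord_inj.
have h1 := ltn_ord s1; have h2 := ltn_ord s2.
case: (ltngtP s1 s2) => h.
- exists (s2 - s1); split; first lia.
  apply/esym; apply: (@iter_cancel _ s1) => //; rewrite subnKC; [exact: E | lia].
- exists (s1 - s2); split; first lia.
  apply/esym; apply: (@iter_cancel _ s2) => //; rewrite subnKC; [exact: (esym E) | lia].
- by exfalso.
Qed.
End Perm.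

Ltac cs := rewrite ?cshift_val /=; [ repeat (case: ifP => ?); lia | lia .. ].

Section Stack.
Variables (r m n : nat) (Y : {set 'I_r * 'I_n}) (X : {set 'I_m * 'I_n}).
Local Notation S := (stack Y X).

Lemma memY (p : 'I_(r + m)) (a : 'I_r) c : p = a :> nat -> ((p, c) \in S) = ((a, c) \in Y).
Proof.
move=> E; rewrite inE /=; case: splitP => [a' Ea'|k Ek].
- by have -> : a' = a by apply: ord_inj; rewrite -Ea' E.
- have := ltn_ord a; lia.
Qed.

Lemma memX (p : 'I_(r + m)) (k : 'I_m) c : p = r + k :> nat -> ((p, c) \in S) = ((k, c) \in X).
Proof.
move=> E; rewrite inE /=; case: splitP => [a' Ea'|k' Ek].
- have := ltn_ord a'; lia.
- by have -> : k' = k by apply: ord_inj; have := ltn_ord k; lia.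
Qed.

Lemma sR_embed x : sR S (embed r x) = embed r (sR X x).
Proof.
case: x => i j; rewrite /sR /embed /=.
have E : (fun t => (rshift r i, cshift j t) \in S) =1 (fun t => (i, cshift j t) \in X).
  by move=> t; apply: memX.
by rewrite (eq_find E).
Qed.

Lemma sR_Y (a : 'I_r) c : sR S (lshift m a, c) = (lshift m a, (sR Y (a, c)).2).
Proof.
rewrite /sR /=.
have E : (fun t => (lshift m a, cshift c t) \in S) =1 (fun t => (a, cshift c t) \in Y).
  by move=> t; apply: memY.
by rewrite (eq_find E).
Qed.

Lemma sC_Y_in (a a1 : 'I_r) c : a < a1 -> (a1, c) \in Y ->
  (forall b : 'I_r, a < b -> b < a1 -> (b, c) \notin Y) ->
  sC S (lshift m a, c) = (lshift m a1, c).
Proof.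
move=> h1 Y1 H; rewrite sC_nxt /=; congr pair.
have ha := ltn_ord a; have ha1 := ltn_ord a1.
rewrite (nxt_char (d := a1 - a)).
- apply: ord_inj; cs.
- lia.
- rewrite (memY (a := a1)) //; cs.
- move=> t /andP [t0 td].
  have ht : a + t < r by lia.
  rewrite (memY (a := Ordinal ht)); first by apply: H => /=; lia.
  cs.
Qed.

Lemma sC_Y_out (a : 'I_r) (k0 : 'I_m) c :
  (forall b : 'I_r, a < b -> (b, c) \notin Y) -> (k0, c) \in X ->
  (forall k : 'I_m, k < k0 -> (k, c) \notin X) ->
  sC S (lshift m a, c) = (rshift r k0, c).
Proof.
move=> H X0 Hk; rewrite sC_nxt /=; congr pair.
have ha := ltn_ord a; have hk := ltn_ord k0.
rewrite (nxt_char (d := r - a + k0)).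
- apply: ord_inj; cs.
- lia.
- rewrite (memX (k := k0)) //; cs.
- move=> t /andP [t0 td].
  case: (ltnP (a + t) r) => ht.
  + rewrite (memY (a := Ordinal ht)); first by apply: H => /=; lia.
    cs.
  + have hk' : a + t - r < m by lia.
    rewrite (memX (k := Ordinal hk')); first by apply: Hk => /=; lia.
    cs.
Qed.

Lemma sC_X_out (i : 'I_m) (a0 : 'I_r) c :
  (forall k : 'I_m, i < k -> (k, c) \notin X) -> (a0, c) \in Y ->
  (forall b : 'I_r, b < a0 -> (b, c) \notin Y) ->
  sC S (rshift r i, c) = (lshift m a0, c).
Proof.
move=> H Y0 Hb; rewrite sC_nxt /=; congr pair.
have ha := ltn_ord a0; have hi := ltn_ord i.
rewrite (nxt_char (d := m - i + a0)).
- apply: ord_inj; cs.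
- lia.
- rewrite (memY (a := a0)) //; cs.
- move=> t /andP [t0 td].
  case: (ltnP (i + t) m) => ht.
  + rewrite (memX (k := Ordinal ht)); first by apply: H => /=; lia.
    cs.
  + have hb : i + t - m < r by lia.
    rewrite (memY (a := Ordinal hb)); first by apply: Hb => /=; lia.
    cs.
Qed.

Lemma sC_X_in (i k : 'I_m) c : (i, c) \in X -> i < k -> (k, c) \in X ->
  inX r (sC S (rshift r i, c)).
Proof.
move=> Xi ik Xk; rewrite sC_nxt /inX.
change (r <= nxt (fun p => (p, c) \in S) (rshift r i)).
have hi := ltn_ord i; have hk := ltn_ord k.
have P0 : (fun p => (p, c) \in S) (rshift r i) by rewrite /= (memX (k := i)).
have [d [/andP [d0 dR] -> Pd Hm]] := nxt_spec (P := fun p => (p, c) \in S) P0.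
have dle : d <= k - i.
  rewrite leqNgt; apply/negP => hd.
  have := Hm (k - i); rewrite (memX (k := k)) ?Xk; last cs.
  by move=> /(_ _)/negP; apply; lia.
cs.
Qed.
End Stack.

Definition top (m n : nat) (X : {set 'I_m * 'I_n}) c (k : 'I_m) :=
  (k, c) \in X /\ forall k' : 'I_m, k' < k -> (k', c) \notin X.

Lemma top_uniq m n (X : {set 'I_m * 'I_n}) c k k' : top X c k -> top X c k' -> k = k'.
Proof.
move=> [h1 H1] [h2 H2]; apply: ord_inj.
case: (ltngtP k k') => // h.
- by have := H2 _ h; rewrite h1.
- by have := H1 _ h; rewrite h2.
Qed.

Lemma exists_top m n (X : {set 'I_m * 'I_n}) c : is_array X -> exists k, top X c k.
Proof.
move=> [_ Xa]; have [k0 hk0] := Xa c.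
case: (arg_minnP (P := fun k => (k, c) \in X) (fun k : 'I_m => nat_of_ord k) hk0).
move=> k hk Hmin; exists k; split => // k' lt; apply/negP => h.
have := Hmin _ h; lia.
Qed.

Lemma fr_char R n r (f : 'I_R * 'I_n -> 'I_R * 'I_n) e U : U < R * n ->
  inX r (iter U f (f e)) -> (forall s, s < U -> ~~ inX r (iter s f (f e))) ->
  first_return f (@inX r R n) e = iter U f (f e).
Proof.
move=> hU h H; rewrite /first_return (@find_char _ _ _ U 0).
- by rewrite iterSr.
- by rewrite size_iota.
- by rewrite nth_iota // add1n iterSr.
- move=> t ht; rewrite nth_iota; last lia. by rewrite add1n iterSr; apply: H.
Qed.


Section Traj.
Variables (r m n : nat) (Y : {set 'I_r * 'I_n}) (X1 X2 : {set 'I_m * 'I_n}).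
Hypotheses (X1a : is_array X1) (X2a : is_array X2).
Local Notation f1 := (bishop (stack Y X1)).
Local Notation f2 := (bishop (stack Y X2)).

Lemma step (a : 'I_r) c : (a, c) \in Y ->
  (exists a1 c1, (a1, c1) \in Y /\ f1 (lshift m a, c) = (lshift m a1, c1)
                 /\ f2 (lshift m a, c) = (lshift m a1, c1))
  \/ (exists c1 k1 k2, [/\ top X1 c1 k1, top X2 c1 k2,
        f1 (lshift m a, c) = (rshift r k1, c1) & f2 (lshift m a, c) = (rshift r k2, c1)]).
Proof.
move=> Yac; rewrite /bishop !sR_Y.
set c1 := (sR Y (a, c)).2.
have Yc1 : (a, c1) \in Y.
  have := sR_in Yac; rewrite sR_nxt /=; done.
case: (boolP [exists b : 'I_r, (a < b) && ((b, c1) \in Y)]).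
- case/existsP => b0 hb0.
  case: (arg_minnP (P := fun b : 'I_r => (a < b) && ((b, c1) \in Y)) (fun k : 'I_r => nat_of_ord k) hb0).
  move=> a1 /andP [h1 h2] Hmin; left; exists a1, c1; split => //.
  have H : forall b : 'I_r, a < b -> b < a1 -> (b, c1) \notin Y.
    move=> b hb hb1; apply/negP => hY; have := Hmin b; rewrite hb hY /=.
    move=> /(_ isT); lia.
  by rewrite (sC_Y_in X1 h1 h2 H) (sC_Y_in X2 h1 h2 H).
- move/existsPn => H.
  have H' : forall b : 'I_r, a < b -> (b, c1) \notin Y.
    by move=> b hb; have := H b; rewrite hb.
  have [k1 [t1 T1]] := exists_top c1 X1a.
  have [k2 [t2 T2]] := exists_top c1 X2a.
  right; exists c1, k1, k2; split => //.
  + exact: sC_Y_out.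
  + exact: sC_Y_out.
Qed.

Variables (a0 : 'I_r) (c0 : 'I_n).
Hypothesis Y0 : (a0, c0) \in Y.
Local Notation p1 := (lshift m a0, c0).

Lemma traj s : (forall s', s' <= s -> ~~ inX r (iter s' f1 p1)) ->
  iter s f2 p1 = iter s f1 p1 /\
  exists a c, (a, c) \in Y /\ iter s f1 p1 = (lshift m a, c).
Proof.
elim: s => [|s IH] H; first by split => //; exists a0, c0.
have [E [a [c [Yac E1]]]] := IH (fun s' h => H s' (leqW h)).
rewrite !iterS E E1.
case: (step Yac) => [[a1 [c1 [Y1 [-> ->]]]] | [c1 [k1 [k2 [_ _ E2 _]]]]].
- by split => //; exists a1, c1.
- exfalso; have := H s.+1 (leqnn _); rewrite iterS E1 E2 /inX /=; lia.
Qed.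

Lemma exit_ : (exists s, inX r (iter s f1 p1)) ->
  exists U c1 k1 k2, [/\ top X1 c1 k1, top X2 c1 k2,
     iter U f1 p1 = (rshift r k1, c1), iter U f2 p1 = (rshift r k2, c1) &
     forall s, s < U -> ~~ inX r (iter s f1 p1) /\ ~~ inX r (iter s f2 p1)].
Proof.
move=> ex.
case: (ex_minnP ex) => U hU Hmin.
have Hlt : forall s, s < U -> ~~ inX r (iter s f1 p1).
  move=> s hs; apply/negP => h; have := Hmin s h; lia.
have U0 : 0 < U.
  case: U hU Hmin Hlt => // hU; exfalso; move: hU; rewrite /inX /=.
  have := ltn_ord a0; lia.
have [E [a [c [Yac E1]]]] := traj (s := U.-1) (fun s' h => Hlt s' ltac:(lia)).
have hUe : U = (U.-1).+1 by lia.
case: (step Yac) => [[a1 [c1 [Y1 [E2 _]]]] | [c1 [k1 [k2 [t1 t2 E2 E3]]]]].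
- exfalso; move: hU; rewrite hUe iterS E1 E2 /inX /=; have := ltn_ord a1; lia.
- exists U, c1, k1, k2; split => //.
  + by rewrite hUe iterS E1 E2.
  + by rewrite hUe iterS E E1 E3.
  + move=> s hs; split; first exact: Hlt.
    have [E' _] := traj (s := s) (fun s' h => Hlt s' ltac:(lia)).
    by rewrite E'; apply: Hlt.
Qed.
End Traj.

Lemma phi2_pair r m n (Y : {set 'I_r * 'I_n}) (X1 X2 : {set 'I_m * 'I_n})
  (X1a : is_array X1) (X2a : is_array X2) (a : 'I_r) c x1 x2 :
  (a, c) \in Y -> x1 \in X1 -> x2 \in X2 ->
  bishop (stack Y X1) (embed r x1) = (lshift m a, c) ->
  bishop (stack Y X2) (embed r x2) = (lshift m a, c) ->
  exists c1 k1 k2, [/\ top X1 c1 k1, top X2 c1 k2,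
    phi2 Y X1 x1 = (rshift r k1, c1) & phi2 Y X2 x2 = (rshift r k2, c1)].
Proof.
move=> Ya x1X x2X E1 E2.
have e1in : embed r x1 \in stack Y X1.
  by case: x1 x1X E1 => i j h _; rewrite /embed (@memX _ _ _ Y _ _ i).
have e2in : embed r x2 \in stack Y X2.
  by case: x2 x2X E2 => i j h _; rewrite /embed (@memX _ _ _ Y _ _ i).
have [t1 [/andP [t10 t1N] P1]] := bishop_period e1in.
have [t2 [/andP [t20 t2N] P2]] := bishop_period e2in.
have ex : exists s, inX r (iter s (bishop (stack Y X1)) (lshift m a, c)).
  exists t1.-1; rewrite -E1 -iterSr prednK // P1 /inX /embed /=; lia.
have [U [c1 [k1 [k2 [T1 T2 I1 I2 H]]]]] := exit_ X1a X2a Ya ex.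
have hU1 : U <= t1.-1.
  rewrite leqNgt; apply/negP => h; have [h1 _] := H _ h.
  move: h1; rewrite -E1 -iterSr prednK // P1 /inX /embed /=; lia.
have hU2 : U <= t2.-1.
  rewrite leqNgt; apply/negP => h; have [_ h2] := H _ h.
  move: h2; rewrite -E2 -iterSr prednK // P2 /inX /embed /=; lia.
exists c1, k1, k2; split => //.
- rewrite /phi2 (@fr_char _ _ _ _ _ U); first by rewrite E1 I1.
  + lia.
  + by rewrite E1 I1 /inX /=; lia.
  + by move=> s hs; rewrite E1; case: (H s hs).
- rewrite /phi2 (@fr_char _ _ _ _ _ U); first by rewrite E2 I2.
  + lia.
  + by rewrite E2 I2 /inX /=; lia.
  + by move=> s hs; rewrite E2; case: (H s hs).
Qed.

Theorem proposition4p2 (r1 r2 m n : nat)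
  (A1 : {set 'I_r1 * 'I_n}) (B1 : {set 'I_r2 * 'I_n}) :
  is_array A1 -> is_array B1 ->
  phi_equiv A1 B1 [set: 'I_m * 'I_n] ->
  forall X : {set 'I_m * 'I_n}, is_array X -> phi_equiv A1 B1 X.
Proof.
move=> Aa Ba HJ X Xa [i j] xX /=.
have qX := sR_in xX.
have Eq : sR X (i, j) = (i, (sR X (i, j)).2) by [].
move: qX Eq; set j' := (sR X (i, j)).2 => qX Eq.
rewrite Eq in qX.
rewrite /bishop !sR_embed Eq /embed /=.
case: (boolP [exists k : 'I_m, (i < k) && ((k, j') \in X)]).
- case/existsP => k /andP [ik Xk].
  rewrite (sC_X_in A1 qX ik Xk) (sC_X_in B1 qX ik Xk) /=.
  by split.
- move/existsPn => H.
  have H' : forall k : 'I_m, i < k -> (k, j') \notin X.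
    by move=> k hk; have := H k; rewrite hk.
  have [a0 [Ya0 Ta0]] := exists_top j' Aa.
  have [b0 [Yb0 Tb0]] := exists_top j' Ba.
  rewrite (sC_X_out H' Ya0 Ta0) (sC_X_out H' Yb0 Tb0) /inX /=.
  have ha0 := ltn_ord a0; have hb0 := ltn_ord b0.
  split; first by split => _; lia.
  move=> _ _.
  have hm : 0 < m by case: (i) => /= ? ?; lia.
  have hn : 0 < n by case: (j') => /= ? ?; lia.
  have hm1 : m.-1 < m by lia.
  pose J := [set: 'I_m * 'I_n].
  have Ja : is_array J by split => [i0|j0]; [exists j' | exists i]; rewrite inE.
  pose x' := (Ordinal hm1, cshift j' n.-1).
  have sRJ : sR J x' = (Ordinal hm1, j').
    rewrite sR_nxt; congr pair.
    rewrite (nxt_char (d := 1)); [ | lia | by rewrite inE | move=> t; lia].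
    apply: ord_inj; have := ltn_ord j'; rewrite cshift_val; last lia.
    rewrite (@cshift_val _ j' n.-1); last lia.
    by case h1: (j' + n.-1 < n); case: ifP => ?; lia.
  have HJ' : forall k : 'I_m, Ordinal hm1 < k -> (k, j') \notin J.
    move=> k /= hk; have := ltn_ord k; lia.
  have JA : bishop (stack A1 J) (embed r1 x') = (lshift m a0, j').
    by rewrite /bishop sR_embed sRJ /embed (sC_X_out HJ' Ya0 Ta0).
  have JB : bishop (stack B1 J) (embed r2 x') = (lshift m b0, j').
    by rewrite /bishop sR_embed sRJ /embed (sC_X_out HJ' Yb0 Tb0).
  have [_ HJ2] := HJ x' (in_setT _).
  rewrite /= JA JB /inX /= in HJ2.
  have := HJ2 ltac:(lia) ltac:(lia).
  have EA : bishop (stack A1 X) (embed r1 (i, j)) = (lshift m a0, j').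
    by rewrite /bishop sR_embed Eq /embed /= (sC_X_out H' Ya0 Ta0).
  have EB : bishop (stack B1 X) (embed r2 (i, j)) = (lshift m b0, j').
    by rewrite /bishop sR_embed Eq /embed /= (sC_X_out H' Yb0 Tb0).
  have [cA [kA1 [kA2 [TA1 TA2 PA1 PA2]]]] := phi2_pair Xa Ja Ya0 xX (in_setT _) EA JA.
  have [cB [kB1 [kB2 [TB1 TB2 PB1 PB2]]]] := phi2_pair Xa Ja Yb0 xX (in_setT _) EB JB.
  rewrite PA1 PA2 PB1 PB2 /coordX /= => [[_ ec]].
  have ecc : cA = cB by apply: ord_inj.
  subst cB; rewrite (top_uniq TA1 TB1); congr pair; lia.
Qed.
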